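(* Let $m/n\in(0,1/2)$ with $\mathrm{LFP}(m/n)=u/v$ and $\mathrm{RFP}(m/n)=p/q$. Then: (a) $\#\mathcal O_{m/n}[m,n-1]=q=n-v$ and $\#\mathcal O_{m/n}[m-1,0]=n-q=v$; (b) $\#(\mathcal O_{m/n}[m,n-1]\cap[1,m])=\#(\mathcal O_{m/n}[m,n-1]\cap[n-m,n-1])=p=m-u$; (c) $\#(\mathcal O_{m/n}[m-1,0]\cap[1,m])=\#(\mathcal O_{m/n}[m-1,0]\cap[n-m,n-1])=m-p=u$.
   Context: All rationals are written in lowest terms. The Farey sequence $\mathcal F_n$ of order $n$ is the increasing sequence of rationals in $[0,1/2]$ with denominator at most $n$. For $h/k\in(0,1/2)$, the left and right Farey parents $\mathrm{LFP}(h/k)$, $\mathrm{RFP}(h/k)$ are the elements of $\mathcal F_k$ immediately preceding and following $h/k$. Let $+_n$ denote addition modulo $n$ on $\mathbb Z_n=\{0,\dots,n-1\}$. For $r,s\in\mathbb Z_n$, $\mathcal O_{m/n}[r,s]=\{r+_njm\colon 0\le j\le k\}$ where $k\ge0$ is least with $r+_nkm=s$. For integers $r\le s$, $[r,s]=\{r,r+1,\dots,s\}$. *)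

(* Defs.v *)
From mathcomp Require Import all_boot.

(* Fractions h/k are represented by pairs of naturals; "h/k < a/b" is h*b < a*k. *)

(* u/v is the left Farey parent of m/n: the element of F_n (rationals in
   [0,1/2] in lowest terms with denominator <= n) immediately preceding m/n. *)
Definition is_LFP (m n u v : nat) : Prop :=
  [/\ coprime u v, 0 < v <= n, 2 * u <= v, u * n < m * v &
      forall h k : nat, 0 < k <= n -> 2 * h <= k ->
        ~ (u * k < h * v /\ h * n < m * k)].

Definition is_RFP (m n p q : nat) : Prop :=
  [/\ coprime p q, 0 < q <= n, 2 * p <= q, m * q < p * n &
      forall h k : nat, 0 < k <= n -> 2 * h <= k ->
        ~ (m * k < h * n /\ h * q < p * k)].

(* O_{m/n}[r,s] = { r +_n j*m : 0 <= j <= k }, k least with r +_n k*m = s.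
   Since r +_n j m (j-fold) equals (r + j*m) %% n, an element x lies in the
   orbit iff x = (r + j*m) %% n for some j such that no i < j already hits s
   (i.e. j <= k).  When coprime m n, k <= n-1, so j ranges over 'I_n. *)
Definition forbit (n m r s : nat) : {set 'I_n} :=
  [set x : 'I_n | [exists j : 'I_n,
     (nat_of_ord x == (r + j * m) %% n) &&
     [forall i : 'I_n, (i < j) ==> ((r + i * m) %% n != s)]]].

Definition forbit_in (n m r s a b : nat) : {set 'I_n} :=
  [set x in forbit n m r s | a <= x <= b].

(* Main.v *)
From mathcomp Require Import all_boot zify.
Require Import Defs.
Set Implicit Arguments. Unset Strict Implicit.

Lemma coprime_det a b c d : a * b = c * d + 1 -> coprime a d.
Proof.
move=> H; rewrite /coprime -dvdn1.
have h1 : gcdn a d %| a * b by apply: dvdn_mulr; exact: dvdn_gcdl.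
have h2 : gcdn a d %| c * d by apply: dvdn_mull; exact: dvdn_gcdr.
by rewrite H dvdn_addr in h1.
Qed.

Lemma coprime_det' a b c d : a * b = c * d + 1 -> coprime c b.
Proof.
move=> H; rewrite /coprime -dvdn1.
have h1 : gcdn c b %| a * b by apply: dvdn_mull; exact: dvdn_gcdr.
have h2 : gcdn c b %| c * d by apply: dvdn_mulr; exact: dvdn_gcdl.
by rewrite H dvdn_addr in h1.
Qed.

Lemma frac_eq a b c d : coprime a b -> coprime c d -> 0 < b -> 0 < d ->
  a * d = c * b -> a = c /\ b = d.
Proof.
move=> cab ccd b0 d0 E.
have cba : coprime b a by rewrite coprime_sym.
have cdc : coprime d c by rewrite coprime_sym.
have bd : b %| d.
  by rewrite -(@Gauss_dvdr b a d (cba)) E dvdn_mull.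
have db : d %| b.
  by rewrite -(@Gauss_dvdr d c b (cdc)) -E dvdn_mull.
have bd' : b = d by apply/eqP; rewrite eqn_dvd bd db.
subst d; split => //; apply/eqP; by rewrite -(eqn_pmul2r b0) E.
Qed.

Lemma rfp_cand m n p0 q0 h k : 0 < q0 -> p0 * n = m * q0 + 1 -> 0 < k <= n ->
  ~ (m * k < h * n /\ h * q0 < p0 * k).
Proof.
move=> q00 E /andP[k0 kn] [h1 h2].
have a1 : q0 * (m * k).+1 <= q0 * (h * n) by rewrite leq_mul2l h1 orbT.
  rewrite mulnSr in a1.
have a2 : n * (h * q0).+1 <= n * (p0 * k) by rewrite leq_mul2l h2 orbT.
  rewrite mulnSr in a2.
have a3 : n * (p0 * k) = k * (m * q0) + k by have := congr1 (muln k) E; rewrite mulnDr muln1 => <-; nia.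
nia.
Qed.

Lemma lfp_cand m n u0 v0 h k : 0 < v0 -> m * v0 = u0 * n + 1 -> 0 < k <= n ->
  ~ (u0 * k < h * v0 /\ h * n < m * k).
Proof.
move=> v00 E /andP[k0 kn] [h1 h2].
have a1 : v0 * (h * n).+1 <= v0 * (m * k) by rewrite leq_mul2l h2 orbT.
  rewrite mulnSr in a1.
have a2 : n * (u0 * k).+1 <= n * (h * v0) by rewrite leq_mul2l h1 orbT.
  rewrite mulnSr in a2.
have a3 : v0 * (m * k) = k * (u0 * n) + k by have := congr1 (muln k) E; rewrite mulnDr muln1 => <-; nia.
nia.
Qed.

Lemma rfp_unique m n p q p0 q0 : 0 < m -> 2 * m < n ->
  p0 * n = m * q0 + 1 -> 0 < q0 <= n -> is_RFP m n p q -> p = p0 /\ q = q0.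
Proof.
move=> m0 mn E q0n [cpq /andP[q0' qn] pq mqp Hno].
have c0 : coprime p0 q0 by apply: (coprime_det E).
have two : 2 * p0 <= q0.
  rewrite leqNgt; apply/negP => H.
  apply: (@rfp_cand m n p0 q0 1 2 (proj1 (andP q0n)) E); first by rewrite /= ; lia.
  split; lia.
have e1 : p * q0 <= p0 * q.
  rewrite leqNgt; apply/negP => H; apply: (Hno p0 q0 q0n two); split => //; lia.
have e2 : p0 * q <= p * q0.
  rewrite leqNgt; apply/negP => H; apply: (@rfp_cand m n p0 q0 p q (proj1 (andP q0n)) E); first by rewrite q0'.
  by split.
apply: frac_eq => //; [by case/andP: q0n| lia].
Qed.

Lemma lfp_unique m n u v u0 v0 : 0 < m -> 2 * m < n ->
  m * v0 = u0 * n + 1 -> 0 < v0 <= n -> is_LFP m n u v -> u = u0 /\ v = v0.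
Proof.
move=> m0 mn E v0n [cuv /andP[v0' vn] uv umv Hno].
have c0 : coprime u0 v0 by apply: (coprime_det' E).
have two : 2 * u0 <= v0.
  case/andP: v0n => a b. nia.
have e1 : u0 * v <= u * v0.
  rewrite leqNgt; apply/negP => H; apply: (Hno u0 v0 v0n two); split => //; lia.
have e2 : u * v0 <= u0 * v.
  rewrite leqNgt; apply/negP => H; apply: (@lfp_cand m n u0 v0 u v (proj1 (andP v0n)) E); first by rewrite v0'.
  by split.
apply: frac_eq => //; [by case/andP: v0n| lia].
Qed.

Lemma forall_cond n m r s K (j : 'I_n) : K <= n -> 0 < K ->
  (forall i, i < n -> ((r + i*m) %% n == s) = (i.+1 == K)) ->
  [forall i : 'I_n, (i < j) ==> ((r + i * m) %% n != s)] = (j < K).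
Proof.
move=> Kn K0 H; apply/forallP/idP => [Hf|jK i].
  rewrite ltnNge; apply/negP => Kj.
  have iK : K.-1 < n by lia.
  have := Hf (Ordinal iK); rewrite /= H // (ltn_predK K0) eqxx implybF; lia.
apply/implyP => ij; rewrite H //; lia.
Qed.

Lemma orbit_card n m r s K lo hi (n0 : 0 < n) :
  (forall i j, i < n -> j < n -> (r + i*m) %% n = (r + j*m) %% n -> i = j) ->
  K <= n -> 0 < K ->
  (forall i, i < n -> ((r + i*m) %% n == s) = (i.+1 == K)) ->
  #|forbit_in n m r s lo hi| = \sum_(j < K) (lo <= (r + j*m) %% n <= hi).
Proof.
move=> inj Kn K0 H.
pose g (j : 'I_n) : 'I_n := Ordinal (ltn_pmod (r + j*m) n0).
have ginj : injective g.
  move=> i j /(congr1 val) /= E; apply: val_inj; exact: (inj _ _ (ltn_ord i) (ltn_ord j) E).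
have -> : forbit_in n m r s lo hi =
   g @: [set j : 'I_n | (j < K) && (lo <= (r + j*m) %% n <= hi)].
  apply/setP => x; rewrite /forbit_in /forbit !inE; apply/andP/imsetP.
    case; rewrite ?inE => /existsP[j /andP[/eqP xe]]; rewrite (forall_cond _ Kn K0 H) => jK xb.
    exists j; first by rewrite ?inE jK -xe.
    by apply: val_inj.
  case=> j; rewrite ?inE => /andP[jK jb] ->; split => //.
  rewrite ?inE; apply/existsP; exists j; by rewrite eqxx /= (forall_cond _ Kn K0 H).
rewrite card_imset // -sum1_card big_mkcond /= [RHS](big_ord_widen n (fun j => (lo <= (r + j*m) %% n <= hi) : nat) Kn) [RHS]big_mkcond /=.
apply: eq_bigr => i _; rewrite inE; case: (i < K) => /=; last by []; by case: ifP.
Qed.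

Lemma step_mod x m n : 0 < n -> m < n -> ((x + m) %% n < m) = (n <= x %% n + m).
Proof.
move=> n0 mn; rewrite modnD // (modn_small mn).
have := ltn_pmod x n0; case: leqP => h /= xl; lia.
Qed.

Lemma step_div x m n : 0 < n -> m < n -> (x + m) %/ n = x %/ n + ((x + m) %% n < m).
Proof.
move=> n0 mn; rewrite step_mod // divnD // (modn_small mn) (divn_small mn) addn0.
by [].
Qed.

Lemma tele a m n K : 0 < n -> m < n ->
  (a + K*m) %/ n = a %/ n + \sum_(j < K) ((a + j.+1 * m) %% n < m).
Proof.
move=> n0 mn; elim: K => [|K IH]; first by rewrite big_ord0 mul0n !addn0.
rewrite big_ord_recr /= mulSnr addnA step_div // IH addnA; congr (_ + _ + _); apply: eq_bigr => i _; by rewrite mulSnr.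
Qed.

Lemma tele_ge a m n K : 0 < n -> m < n ->
  (a + K*m) %/ n = a %/ n + \sum_(j < K) (n - m <= (a + j * m) %% n).
Proof.
move=> n0 mn; rewrite (@tele a m n K n0 mn); congr (_ + _); apply: eq_bigr => j _.
rewrite mulSnr addnA step_mod //; congr (nat_of_bool _); lia.
Qed.

Lemma modeq n m u v a b : m * v = u * n + 1 ->
  (a * m == b * m %[mod n]) = (a == b %[mod n]).
Proof.
move=> E; apply/idP/idP => /eqP h; apply/eqP; last by rewrite -modnMml h modnMml.
have h2 : a * m * v = b * m * v %[mod n] by rewrite -modnMml h modnMml.
move: h2; rewrite -!mulnA E !mulnDr !muln1 !mulnA.
by rewrite !modnMDl.
Qed.

Lemma modsmall_eq n a b : 0 < b < n -> 0 < a <= n -> (a == b %[mod n]) = (a == b).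
Proof.
move=> /andP[b0 bn] /andP[a0 an]; rewrite (modn_small bn).
case: (ltngtP a n) an => // h _.
  by rewrite modn_small.
by subst a; rewrite modnn; lia.
Qed.

Lemma mod0_1 n x : 1 < n -> (x %% n == 0) = ((x + 1) %% n == 1).
Proof.
move=> n1; rewrite -modnDml.
have := ltn_pmod x (ltnW n1).
case: (ltngtP (x %% n).+1 n) => h _.
- by rewrite addn1 (modn_small h).
- lia.
- rewrite addn1 h modnn /=; apply/negbTE/eqP; lia.
Qed.

Lemma sum_eq0 k : 0 < k -> \sum_(i < k) (nat_of_ord i == 0) = 1.
Proof. case: k => // k _; rewrite big_ord_recl /= big1 // => i _. Qed.

Lemma sum_eqlast k : 0 < k -> \sum_(i < k) ((nat_of_ord i).+1 == k) = 1.
Proof.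
case: k => // k _; rewrite big_ord_recr /= eqxx big1 // => i _.
by have := ltn_ord i; rewrite eqSS; case: eqP => // ->; rewrite ltnn.
Qed.

Lemma forbit_all n m r s : forbit n m r s = forbit_in n m r s 0 n.-1.
Proof.
apply/setP => x; rewrite /forbit_in inE.
have -> : 0 <= x <= n.-1 by have := ltn_ord x; lia.
by rewrite andbT.
Qed.

Theorem lemma1p11 (m n u v p q : nat) :
  0 < m -> 2 * m < n -> coprime m n ->
  is_LFP m n u v -> is_RFP m n p q ->
  [/\ (#|forbit n m m (n.-1)| = q /\ q = n - v),
      (#|forbit n m (m.-1) 0| = n - q /\ n - q = v),
      [/\ #|forbit_in n m m (n.-1) 1 m| = p,
          #|forbit_in n m m (n.-1) (n - m) (n.-1)| = p & p = m - u] &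
      [/\ #|forbit_in n m (m.-1) 0 1 m| = m - p,
          #|forbit_in n m (m.-1) 0 (n - m) (n.-1)| = m - p & m - p = u]].
Proof.
move=> m0 mn cmn HL HR.
have n0 : 0 < n by lia.
have n1 : 1 < n by lia.
have mlt : m < n by lia.
have [a an dv] := @Bezoutl n m n0.
rewrite gcdnC (eqP cmn) in dv.
set P := (1 + a * m) %/ n.
have E1 : P * n = m * a + 1 by rewrite /P divnK // addnC mulnC.
have a0 : 0 < a.
  rewrite lt0n; apply/eqP => a0; move: dv; rewrite a0 mul0n addn0 dvdn1 => /eqP; lia.
have Pm : P <= m by nia.
have aq : 0 < a <= n by rewrite a0 ltnW.
have [-> ->] := rfp_unique m0 mn E1 aq HR.
have E2 : m * (n - a) = (m - P) * n + 1 by nia.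
have vq : 0 < n - a <= n by apply/andP; split; lia.
have [-> ->] := lfp_unique m0 mn E2 vq HL.
have P0 : 0 < P by nia.
have meq := fun x y => @modeq n m (m - P) (n - a) x y E2.
have inj1 : forall i j, i < n -> j < n -> (m + i*m) %% n = (m + j*m) %% n -> i = j.
  move=> i j il jl /eqP; rewrite eqn_modDl meq !modn_small //; by move/eqP.
have inj2 : forall i j, i < n -> j < n -> (m.-1 + i*m) %% n = (m.-1 + j*m) %% n -> i = j.
  move=> i j il jl /eqP; rewrite eqn_modDl meq !modn_small //; by move/eqP.
have H1 : forall i, i < n -> ((m + i*m) %% n == n.-1) = (i.+1 == a).
  have qm : (a * m) %% n = n.-1.
    have -> : a * m = P.-1 * n + n.-1 by nia.
    by rewrite modnMDl modn_small //; lia.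
  move=> i il; rewrite -mulSn -qm meq modsmall_eq //.
  by rewrite a0 an.
have vm : ((n - a) * m) %% n = 1.
  by rewrite mulnC E2 modnMDl modn_small.
have H2 : forall i, i < n -> ((m.-1 + i*m) %% n == 0) = (i.+1 == n - a).
  move=> i il; rewrite mod0_1 //.
  have -> : m.-1 + i*m + 1 = i.+1 * m by rewrite mulSn; lia.
  have -> : (i.+1 * m %% n == 1) = (i.+1 * m == (n - a) * m %[mod n]) by rewrite vm.
  rewrite meq modsmall_eq //; apply/andP; split; lia.
have av : n - a <= n by lia.
have va : 0 < n - a by lia.
have C1 := fun lo hi => @orbit_card n m m n.-1 a lo hi n0 inj1 (ltnW an) a0 H1.
have C2 := fun lo hi => @orbit_card n m m.-1 0 (n - a) lo hi n0 inj2 av va H2.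
have S1 : #|forbit n m m n.-1| = a.
  rewrite forbit_all C1 -[RHS]card_ord -sum1_card; apply: eq_bigr => j _.
  have h := ltn_pmod (m + j * m) n0.
  by have -> : (0 <= (m + j * m) %% n <= n.-1) = true by apply/andP; split; lia.
have S2 : #|forbit n m m.-1 0| = n - a.
  rewrite forbit_all C2 -[RHS]card_ord -sum1_card; apply: eq_bigr => j _.
  have h := ltn_pmod (m.-1 + j * m) n0.
  by have -> : (0 <= (m.-1 + j * m) %% n <= n.-1) = true by apply/andP; split; lia.
have S3 : #|forbit_in n m m n.-1 1 m| = P.
  rewrite C1.
  have T := @tele 0 m n a n0 mlt.
  rewrite add0n div0n add0n in T.
  have E3 : (a * m) %/ n = P.-1.
    have -> : a * m = P.-1 * n + n.-1 by nia.
    rewrite divnMDl // divn_small ?addn0 //; lia.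
  have -> : P = (a * m) %/ n + 1 by rewrite E3; lia.
  rewrite T.
  have -> : \sum_(j < a) (1 <= (m + j * m) %% n <= m) =
            \sum_(j < a) (((m + j * m) %% n < m) + (nat_of_ord j == 0)).
    apply: eq_bigr => j _.
    have ja : j.+1 < n by have := ltn_ord j; lia.
    have xm : ((m + j*m) %% n == m) = (nat_of_ord j == 0).
      have -> : ((m + j*m) %% n == m) = (j.+1 * m == 1 * m %[mod n]).
        by rewrite mulSn mul1n (modn_small mlt).
      rewrite meq !modn_small //; lia.
    have x0 : 0 < (m + j*m) %% n.
      rewrite lt0n; apply/negP => /eqP h.
      have : (j.+1 * m == 0 * m %[mod n]) by rewrite mulSn h mul0n mod0n.
      rewrite meq !modn_small //; lia.
    rewrite x0 /= -xm; by case: ltngtP.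
  by rewrite big_split /= sum_eq0.
have S4 : #|forbit_in n m m n.-1 (n - m) n.-1| = P.
  rewrite C1.
  have T := @tele_ge m m n a n0 mlt.
  have E4 : m + a * m = P * n + m.-1 by rewrite E1 [m * a]mulnC; lia.
  rewrite E4 divnMDl // (divn_small mlt) (divn_small (_ : m.-1 < n)) ?add0n ?addn0 in T; last by lia.
  rewrite {1}T; apply: eq_bigr => j _.
  have h := ltn_pmod (m + j * m) n0.
  have hh : (m + j * m) %% n <= n.-1 by lia.
  by rewrite hh andbT.
have S6 : #|forbit_in n m m.-1 0 (n - m) n.-1| = m - P.
  rewrite C2.
  have T := @tele_ge m.-1 m n (n - a) n0 mlt.
  have E4 : m.-1 + (n - a) * m = (m - P) * n + m by rewrite mulnC E2; lia.
  rewrite E4 divnMDl // (divn_small mlt) (divn_small (_ : m.-1 < n)) ?add0n ?addn0 in T; last by lia.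
  rewrite {1}T; apply: eq_bigr => j _.
  have h := ltn_pmod (m.-1 + j * m) n0.
  have hh : (m.-1 + j * m) %% n <= n.-1 by lia.
  by rewrite hh andbT.
have S5 : #|forbit_in n m m.-1 0 1 m| = m - P.
  rewrite C2.
  have Hs : \sum_(j < n - a) ((m.-1 + j * m) %% n < m) = (m - P).+1.
    case Ev: (n - a) va => [|v'] // _.
    rewrite big_ord_recl /= mul0n addn0 (modn_small (_ : m.-1 < n)); last by lia.
    rewrite (_ : m.-1 < m); last by lia.
    have T := @tele m.-1 m n v' n0 mlt.
    have E4 : m.-1 + v' * m = (m - P) * n.
      by move: E2; rewrite Ev mulnC mulSn; lia.
    rewrite E4 in T.
    rewrite mulnK // (divn_small (_ : m.-1 < n)) ?add0n in T; last by lia.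
    by rewrite T.
  suff Hs2 : \sum_(j < n - a) (1 <= (m.-1 + j * m) %% n <= m) +
     \sum_(j < n - a) ((nat_of_ord j).+1 == n - a) = \sum_(j < n - a) ((m.-1 + j * m) %% n < m).
    by rewrite (sum_eqlast va) Hs in Hs2; lia.
  rewrite -big_split /=; apply: eq_bigr => j _.
  have jv := ltn_ord j.
  have ym : ((m.-1 + j * m) %% n == m) = false.
    apply/negP => /eqP h.
    have : (m.-1 + j * m == m.-1 + 1 %[mod n]).
      by rewrite h addn1 prednK // (modn_small mlt).
    rewrite eqn_modDl (modn_small n1) -{1}vm meq !modn_small //; lia.
  have y0 := H2 j (leq_trans jv av).
  rewrite -y0; move: ym; set y := (m.-1 + j * m) %% n; case: (ltngtP y m) => // h _; move: h; case: posnP => //= ->; by rewrite ltn0.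
split; [split => //; lia | by split | split => //; lia | by split].
Qed.
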